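(* Let $n\in\mathbb N$, let $f$ be extremal for $M_n$ with $f(0)=e^{-t}$, $t>0$, written as $f(z)=\exp\big(-\sum_{j=1}^N\lambda_j\frac{1+\alpha_jz}{1-\alpha_jz}\big)$, and let $g(z)=-\sum_{j=1}^N\lambda_j\frac{1+\alpha_jz}{1-\alpha_jz}$ (a rational function, so $f=e^g$). Then $g$ has exactly $N$ zeros $\beta_1,\dots,\beta_N$, all lying on $\partial\mathbb D$, and \[g(z)=t\,\frac{\prod_{j=1}^N(z-\beta_j)}{\prod_{j=1}^N(z-\overline{\alpha_j})}.\]
   Context: $\mathbb D$ is the open unit disc; $\mathcal B_0=\{f$ holomorphic on $\mathbb D: 0<|f|\le1\}$; $M_n(f)=\mathrm{Re}\,a_n$; $f\in\mathcal B_0$ is extremal for $M_n$ if $M_n(f)\ge M_n(F)$ for all $F\in\mathcal B_0$. It is known that an extremal $f$ with $f(0)>0$ has the displayed form with $1\le N\le n$, $\lambda_j>0$ and distinct $\alpha_j\in\partial\mathbb D$. *)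

(* Defs.v *)
From Stdlib Require Import Reals.
From Coquelicot Require Import Coquelicot.
Open Scope C_scope.

Definition cexp (z : C) : C :=
  (exp (Re z) * cos (Im z), exp (Re z) * sin (Im z))%R.

Fixpoint cpow (z : C) (k : nat) : C :=
  match k with O => RtoC 1 | S m => z * cpow z m end.

Fixpoint csum (F : nat -> C) (N : nat) : C :=
  match N with O => RtoC 0 | S m => csum F m + F m end.
Fixpoint cprod (F : nat -> C) (N : nat) : C :=
  match N with O => RtoC 1 | S m => cprod F m * F m end.

(* f is holomorphic on the unit disc D with Taylor coefficients a:
   f z = sum_k a_k z^k for every z in D *)
Definition taylor_on_disc (a : nat -> C) (f : C -> C) : Prop :=
  forall z : C, (Cmod z < 1)%R ->
    @is_series C_AbsRing C_NormedModule (fun k => a k * cpow z k) (f z).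

Definition B0 (f : C -> C) : Prop :=
  (exists a, taylor_on_disc a f) /\
  (forall z : C, (Cmod z < 1)%R -> (0 < Cmod (f z) <= 1)%R).

(* f is extremal for M_n (M_n(F) = Re a_n(F)) *)
Definition extremal (n : nat) (f : C -> C) : Prop :=
  B0 f /\
  forall a, taylor_on_disc a f ->
  forall (F : C -> C) (b : nat -> C), B0 F -> taylor_on_disc b F ->
    (Re (b n) <= Re (a n))%R.

Definition gfun (N : nat) (lam : nat -> R) (alpha : nat -> C) (z : C) : C :=
  - csum (fun j => RtoC (lam j) * ((RtoC 1 + alpha j * z) / (RtoC 1 - alpha j * z))) N.

(* Main.v *)
Require Import Defs.
From Stdlib Require Import Reals.
From Coquelicot Require Import Coquelicot.
From Stdlib Require Import Lia Lra Ranalysis5 IndefiniteDescription.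

Section PartP1.
Open Scope C_scope.

Fixpoint IsPoly (d : nat) (f : C -> C) : Prop :=
  match d with
  | O => exists c, forall z, f z = c
  | S d' => exists c g, IsPoly d' g /\ forall z, f z = c + z * g z
  end.

Lemma poly_ext d f g : (forall z, f z = g z) -> IsPoly d f -> IsPoly d g.
Proof.
  destruct d as [|d]; simpl.
  - intros H [c Hc]. exists c. intros z. rewrite <- H. auto.
  - intros H [c [h [Hh Hf]]]. exists c, h. split; auto. intros z. rewrite <- H. auto.
Qed.

Lemma poly_const d c : IsPoly d (fun _ => c).
Proof.
  induction d; simpl.
  - exists c. auto.
  - exists c, (fun _ => RtoC 0). split.
    + clear IHd. induction d; simpl. exists (RtoC 0); auto.
      exists (RtoC 0), (fun _ => RtoC 0). split; auto. intros; ring.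
    + intros; ring.
Qed.

Lemma poly_mono d f : IsPoly d f -> IsPoly (S d) f.
Proof.
  revert f; induction d; intros f Hf.
  - destruct Hf as [c Hc]. exists c, (fun _ => RtoC 0). split.
    exists (RtoC 0); auto. intros z; rewrite Hc; ring.
  - destruct Hf as [c [g [Hg Hf]]]. exists c, g. split; auto.
Qed.

Lemma poly_add d f g : IsPoly d f -> IsPoly d g -> IsPoly d (fun z => f z + g z).
Proof.
  revert f g; induction d; intros f g Hf Hg.
  - destruct Hf as [c Hc]; destruct Hg as [c' Hc']. exists (c + c'). intros; rewrite Hc, Hc'; auto.
  - destruct Hf as [c [h [Hh Hf]]]; destruct Hg as [c' [h' [Hh' Hg]]].
    exists (c + c'), (fun z => h z + h' z). split. apply IHd; auto.
    intros z; rewrite Hf, Hg; ring.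
Qed.

Lemma poly_scal d a f : IsPoly d f -> IsPoly d (fun z => a * f z).
Proof.
  revert f; induction d; intros f Hf.
  - destruct Hf as [c Hc]. exists (a * c). intros; rewrite Hc; auto.
  - destruct Hf as [c [h [Hh Hf]]]. exists (a * c), (fun z => a * h z). split. apply IHd; auto.
    intros z; rewrite Hf; ring.
Qed.

Lemma poly_mul_lin d f a : IsPoly d f -> IsPoly (S d) (fun z => f z * (z - a)).
Proof.
  intros Hf.
  apply poly_ext with (fun z => (fun z => z * f z) z + (fun z => (- a) * f z) z).
  intros; simpl; ring.
  apply poly_add. exists (RtoC 0), f. split; auto. intros; ring.
  apply poly_mono, poly_scal; auto.
Qed.

Lemma poly_div d f b : IsPoly (S d) f ->
  exists q, IsPoly d q /\ forall z, f z = f b + (z - b) * q z.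
Proof.
  revert f; induction d; intros f Hf.
  - destruct Hf as [c [g [[c' Hg] Hf]]]. exists g. split. exists c'; auto.
    intros z. rewrite !Hf, !Hg. ring.
  - destruct Hf as [c [g [Hg Hf]]].
    destruct (IHd g Hg) as [q [Hq Hgq]].
    exists (fun z => g b + z * q z). split.
    + exists (g b), q. split; auto.
    + intros z. rewrite !Hf. rewrite (Hgq z). ring.
Qed.

Lemma Cmult_eq0 (a b : C) : a * b = 0 -> a = 0 \/ b = 0.
Proof.
  intros H. destruct (Ceq_dec a 0) as [Ha|Ha]; auto. right.
  replace b with (/ a * (a * b)) by (field; auto). rewrite H. ring.
Qed.

Lemma poly_roots d f (b : nat -> C) : IsPoly d f ->
  (forall i j, (i < S d)%nat -> (j < S d)%nat -> b i = b j -> i = j) ->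
  (forall i, (i < S d)%nat -> f (b i) = 0) -> forall z, f z = 0.
Proof.
  revert f; induction d; intros f Hf Hinj Hz.
  - destruct Hf as [c Hc]. intros z. rewrite Hc. rewrite <- (Hc (b O)). apply Hz. lia.
  - destruct (poly_div d f (b (S d)) Hf) as [q [Hq Hfq]].
    assert (Hq0 : forall z, q z = 0).
    { apply (IHd q Hq).
      - intros i j Hi Hj. apply Hinj; lia.
      - intros i Hi. assert (H := Hz i ltac:(lia)). rewrite Hfq in H.
        rewrite (Hz (S d)) in H by lia.
        destruct (Cmult_eq0 (b i - b (S d)) (q (b i))) as [H1|H1].
        + rewrite <- H. ring.
        + exfalso. assert (b i = b (S d)). { replace (b i) with (b i - b (S d) + b (S d)) by ring. rewrite H1; ring. }
          apply Hinj in H0; lia.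
        + auto. }
    intros z. rewrite Hfq, Hq0, (Hz (S d)) by lia. ring.
Qed.

Lemma cprod_poly (u : nat -> C) N : IsPoly N (fun z => cprod (fun j => z - u j) N).
Proof.
  induction N; simpl.
  - exists (RtoC 1); auto.
  - apply poly_mul_lin with (f := fun z => cprod (fun j => z - u j) N). auto.
Qed.

Lemma cprod_diff (u v : nat -> C) N :
  IsPoly N (fun z => cprod (fun j => z - u j) (S N) - cprod (fun j => z - v j) (S N)).
Proof.
  induction N.
  - simpl. exists (v O - u O). intros; ring.
  - apply poly_ext with (fun z => (fun z => (cprod (fun j => z - u j) (S N) - cprod (fun j => z - v j) (S N)) * (z - u (S N))) z
       + (fun z => (v (S N) - u (S N)) * cprod (fun j => z - v j) (S N)) z).
    intros z; simpl; ring.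
    apply poly_add. apply poly_mul_lin; auto. apply poly_scal, cprod_poly.
Qed.

Lemma cprod_zero (F : nat -> C) N : cprod F N = 0 -> exists j, (j < N)%nat /\ F j = 0.
Proof.
  induction N; simpl; intros H.
  - exfalso. injection H. intros. lra.
  - destruct (Cmult_eq0 _ _ H) as [H1|H1].
    + destruct (IHN H1) as [j [Hj Hf]]. exists j; split; auto.
    + exists N; split; auto.
Qed.

Lemma cprod_zero' (F : nat -> C) N j : (j < N)%nat -> F j = 0 -> cprod F N = 0.
Proof.
  induction N; simpl; intros Hj Hf. lia.
  destruct (Nat.eq_dec j N). subst. rewrite Hf; ring. rewrite IHN by (auto; lia). ring.
Qed.

Lemma cprod_nz (F : nat -> C) N : (forall j, (j < N)%nat -> F j <> 0) -> cprod F N <> 0.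
Proof.
  intros H H0. destruct (cprod_zero F N H0) as [j [Hj Hf]]. apply (H j); auto.
Qed.

End PartP1.

Section PartP2.
Open Scope C_scope.

Lemma unit_sq (a : C) : Cmod a = 1%R -> (fst a * fst a + snd a * snd a = 1)%R.
Proof.
  destruct a as [x y]. unfold Cmod; simpl. intros H.
  match type of H with sqrt ?e = _ => assert (H0 : (0 <= e)%R) by nra;
    pose proof (sqrt_sqrt _ H0) as H1; rewrite H in H1 end. nra.
Qed.

Lemma unit_conj (a : C) : Cmod a = 1%R -> a * Cconj a = 1.
Proof.
  intros H. apply unit_sq in H. destruct a as [x y]; simpl in *.
  unfold Cmult, Cconj; simpl. apply injective_projections; simpl; nra.
Qed.

Lemma unit_nz (a : C) : Cmod a = 1%R -> a <> 0.
Proof. intros H H0. rewrite H0, Cmod_0 in H. lra. Qed.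

Lemma term_eq (a z : C) : Cmod a = 1%R -> z <> Cconj a ->
  (1 + a * z) / (1 - a * z) * (z - Cconj a) = - (z + Cconj a).
Proof.
  intros Ha Hz. pose proof (unit_conj a Ha) as Haa. pose proof (unit_nz a Ha) as Ha0.
  assert (E1 : 1 + a * z = a * (Cconj a + z)) by (rewrite <- Haa; ring).
  assert (E2 : 1 - a * z = - a * (z - Cconj a)) by (rewrite <- Haa; ring).
  assert (Hz' : z - Cconj a <> 0). { intros H. apply Hz. replace z with (z - Cconj a + Cconj a) by ring. rewrite H; ring. }
  rewrite E1, E2. field. split; auto.
Qed.

Fixpoint Qf (lam : nat -> R) (alpha : nat -> C) (N : nat) (z : C) : C :=
  match N with
  | O => 0
  | S m => Qf lam alpha m z * (z - Cconj (alpha m))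
           + RtoC (lam m) * (z + Cconj (alpha m)) * cprod (fun j => z - Cconj (alpha j)) m
  end.

Lemma gfun_Q N lam alpha z : (forall j, (j < N)%nat -> Cmod (alpha j) = 1%R) ->
  (forall j, (j < N)%nat -> z <> Cconj (alpha j)) ->
  gfun N lam alpha z * cprod (fun j => z - Cconj (alpha j)) N = Qf lam alpha N z.
Proof.
  induction N; intros Ha Hz.
  - unfold gfun; simpl. ring.
  - simpl. rewrite <- IHN by (intros; auto).
    unfold gfun; simpl.
    pose proof (term_eq (alpha N) z (Ha N ltac:(lia)) (Hz N ltac:(lia))) as T.
    set (P := cprod (fun j => z - Cconj (alpha j)) N) in *.
    set (S := csum _ N).
    transitivity (- S * P * (z - Cconj (alpha N)) - RtoC (lam N) * P *
       ((1 + alpha N * z) / (1 - alpha N * z) * (z - Cconj (alpha N)))). ring.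
    rewrite T. ring.
Qed.

Definition sC (lam : nat -> R) N := csum (fun j => RtoC (lam j)) N.

Lemma Q_lead lam alpha N :
  IsPoly N (fun z => Qf lam alpha (S N) z - sC lam (S N) * cprod (fun j => z - Cconj (alpha j)) (S N)).
Proof.
  induction N.
  - simpl. exists (2 * RtoC (lam O) * Cconj (alpha O)). intros z. unfold sC; simpl. ring.
  - apply poly_ext with (fun z =>
      (fun z => (Qf lam alpha (S N) z - sC lam (S N) * cprod (fun j => z - Cconj (alpha j)) (S N)) * (z - Cconj (alpha (S N)))) z
      + (fun z => (2 * RtoC (lam (S N)) * Cconj (alpha (S N))) * cprod (fun j => z - Cconj (alpha j)) (S N)) z).
    + intros z. change (Qf lam alpha (S (S N)) z) with
        (Qf lam alpha (S N) z * (z - Cconj (alpha (S N)))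
           + RtoC (lam (S N)) * (z + Cconj (alpha (S N))) * cprod (fun j => z - Cconj (alpha j)) (S N)).
      change (sC lam (S (S N))) with (sC lam (S N) + RtoC (lam (S N))).
      change (cprod (fun j => z - Cconj (alpha j)) (S (S N))) with
        (cprod (fun j => z - Cconj (alpha j)) (S N) * (z - Cconj (alpha (S N)))).
      ring.
    + apply poly_add. apply poly_mul_lin; auto. apply poly_scal, cprod_poly.
Qed.

Fixpoint rsum (F : nat -> R) (N : nat) : R :=
  match N with O => 0%R | S m => (rsum F m + F m)%R end.

Lemma sC_real lam N : sC lam N = RtoC (rsum lam N).
Proof.
  induction N; unfold sC in *; simpl. reflexivity.
  rewrite IHN. apply injective_projections; simpl; ring.
Qed.

Lemma gfun_0 N lam alpha : gfun N lam alpha 0 = - sC lam N.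
Proof.
  unfold gfun, sC. f_equal. induction N; simpl; auto.
  rewrite IHN. f_equal.
  replace (1 + alpha N * 0) with (RtoC 1) by ring.
  replace (1 - alpha N * 0) with (RtoC 1) by ring.
  field.
Qed.

End PartP2.

Section PartP3.
Open Scope R_scope.

Definition kf (x : R) : R := sin x / (1 - cos x).

Lemma cos1 u : -(2*PI) < u < 2*PI -> cos u = 1 -> u = 0.
Proof.
  intros Hu Hc.
  assert (Hs : sin u = 0). { pose proof (sin2_cos2 u) as H. rewrite Hc in H. unfold Rsqr in H. nra. }
  pose proof PI_RGT_0 as Hpi0.
  destruct (Rle_dec 0 u).
  - destruct (sin_eq_O_2PI_0 u) as [H|[H|H]]; try lra.
    subst. rewrite cos_PI in Hc. lra.
  - destruct (sin_eq_O_2PI_0 (-u)) as [H1|[H1|H1]]; try lra.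
    rewrite sin_neg, Hs; lra.
    assert (u = - PI) by lra. subst. rewrite cos_neg, cos_PI in Hc. lra.
Qed.

Lemma cos1_sin u : cos u = 1 -> sin u = 0.
Proof. intros Hc. pose proof (sin2_cos2 u) as H. rewrite Hc in H. unfold Rsqr in H. nra. Qed.

Lemma kf_shift s c p : cos (p - c) = 1 -> kf (s - c) = kf (s - p).
Proof.
  intros H. pose proof (cos1_sin _ H) as Hs. unfold kf.
  replace (s - c) with ((s - p) + (p - c)) by ring.
  rewrite sin_plus, cos_plus, H, Hs. f_equal; ring.
Qed.

Lemma kf_cont c x : cos (x - c) <> 1 -> continuity_pt (fun s => kf (s - c)) x.
Proof.
  intros H. unfold kf.
  assert (Hsh : continuity_pt (fun s => s - c) x).
  { exact (continuity_pt_minus (fun s => s) (fun _ => c) x (derivable_continuous_pt _ _ (derivable_pt_id x)) (continuity_pt_const (fun _ => c) x (fun _ _ => eq_refl))). }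
  apply (continuity_pt_div (fun s => sin (s - c)) (fun s => 1 - cos (s - c)) x).
  - exact (continuity_pt_comp (fun s => s - c) sin x Hsh (continuity_sin _)).
  - apply (continuity_pt_minus (fun _ => 1) (fun s => cos (s - c)) x).
    apply continuity_pt_const; intros ? ?; auto.
    exact (continuity_pt_comp (fun s => s - c) cos x Hsh (continuity_cos _)).
  - lra.
Qed.

Definition nr (p : R) (P : R -> Prop) := exists d, 0 < d /\ forall s, p < s < p + d -> P s.
Definition nl (p : R) (P : R -> Prop) := exists d, 0 < d /\ forall s, p - d < s < p -> P s.

Lemma cont_lb f p : continuity_pt f p -> exists L, nr p (fun s => L < f s) /\ nl p (fun s => L < f s).
Proof.
  intros H. destruct (H 1 ltac:(lra)) as [a [Ha Hf]]. exists (f p - 1).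
  assert (K : forall s, s <> p -> Rabs (s - p) < a -> f p - 1 < f s).
  { intros s Hs Hsa. assert (Hd := Hf s). simpl in Hd. unfold R_dist in Hd.
    assert (Rabs (f s - f p) < 1). { apply Hd. split. split. exact I. auto. auto. }
    apply Rabs_def2 in H0. lra. }
  split; exists a; split; auto; intros s Hs; apply K; try lra; apply Rabs_def1; lra.
Qed.

Lemma kf_right M : nr 0 (fun s => M < kf s).
Proof.
  pose proof PI_RGT_0 as Hpi.
  exists (Rmin (PI/2) (/ (Rabs M + 1))). split.
  { apply Rmin_glb_lt. lra. apply Rinv_0_lt_compat. pose proof (Rabs_pos M). lra. }
  intros s [H1 H2]. rewrite Rplus_0_l in H2.
  assert (Hs1 : s < PI/2) by (eapply Rlt_le_trans; [exact H2| apply Rmin_l]).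
  assert (Hs2 : s < / (Rabs M + 1)) by (eapply Rlt_le_trans; [exact H2| apply Rmin_r]).
  assert (Hsin : 0 < sin s) by (apply sin_gt_0; lra).
  assert (Hcos : 0 < cos s) by (apply cos_gt_0; lra).
  assert (Hsx : sin s < s) by (apply sin_lt_x; lra).
  assert (Hc1 : cos s < 1). { destruct (Req_dec (cos s) 1). apply cos1 in H; lra.
     pose proof (COS_bound s). lra. }
  pose proof (sin2_cos2 s) as E. unfold Rsqr in E.
  unfold kf. apply Rlt_div_r. lra.
  destruct (Rle_dec M 0). nra.
  assert (HM1: (M+1)*s < 1).
  { rewrite Rabs_right in Hs2 by lra. apply Rmult_lt_compat_l with (r := M+1) in Hs2; [|lra].
    rewrite Rinv_r in Hs2; lra. }
  assert (HM : M * sin s < 1) by nra.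
  assert (H3 : M * sin s * sin s < (1 + cos s) * sin s) by nra.
  assert (H4 : M * (1 - cos s) * (1 + cos s) < sin s * (1 + cos s)) by nra.
  apply Rmult_lt_reg_r with (1 + cos s). lra. lra.
Qed.

End PartP3.

Section PartP4.
Open Scope R_scope.

Lemma kf_odd x : kf (- x) = - kf x.
Proof. unfold kf. rewrite sin_neg, cos_neg. unfold Rdiv. ring. Qed.

Lemma kf_left M : nl 0 (fun s => kf s < M).
Proof.
  destruct (kf_right (- M)) as [d [Hd H]]. exists d. split; auto.
  intros s Hs. assert (K := H (- s) ltac:(lra)). rewrite kf_odd in K. lra.
Qed.

Lemma kf_right_sh p M : nr p (fun s => M < kf (s - p)).
Proof.
  destruct (kf_right M) as [d [Hd H]]. exists d. split; auto.
  intros s Hs. apply H. lra.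
Qed.

Lemma kf_left_sh p M : nl p (fun s => kf (s - p) < M).
Proof.
  destruct (kf_left M) as [d [Hd H]]. exists d. split; auto.
  intros s Hs. apply H. lra.
Qed.

Lemma nr_imp p (P Q : R -> Prop) : (forall s, P s -> Q s) -> nr p P -> nr p Q.
Proof. intros H [d [Hd K]]. exists d; split; auto. Qed.
Lemma nr_and p (P Q : R -> Prop) : nr p P -> nr p Q -> nr p (fun s => P s /\ Q s).
Proof. intros [d [Hd K]] [d' [Hd' K']]. exists (Rmin d d'). split. apply Rmin_glb_lt; auto.
  intros s Hs. pose proof (Rmin_l d d'). pose proof (Rmin_r d d'). split; [apply K|apply K']; lra. Qed.
Lemma nr_true p : nr p (fun _ => True).
Proof. exists 1; split; auto; lra. Qed.
Lemma nl_imp p (P Q : R -> Prop) : (forall s, P s -> Q s) -> nl p P -> nl p Q.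
Proof. intros H [d [Hd K]]. exists d; split; auto. Qed.
Lemma nl_and p (P Q : R -> Prop) : nl p P -> nl p Q -> nl p (fun s => P s /\ Q s).
Proof. intros [d [Hd K]] [d' [Hd' K']]. exists (Rmin d d'). split. apply Rmin_glb_lt; auto.
  intros s Hs. pose proof (Rmin_l d d'). pose proof (Rmin_r d d'). split; [apply K|apply K']; lra. Qed.
Lemma nl_true p : nl p (fun _ => True).
Proof. exists 1; split; auto; lra. Qed.

Section SumLim.
Variable E : (R -> Prop) -> Prop.
Hypothesis Himp : forall P Q : R -> Prop, (forall s, P s -> Q s) -> E P -> E Q.
Hypothesis Hand : forall P Q : R -> Prop, E P -> E Q -> E (fun s => P s /\ Q s).
Hypothesis Htrue : E (fun _ => True).

Lemma sum_lb (T : nat -> R -> R) N : (forall m, (m < N)%nat -> exists L, E (fun s => L < T m s)) ->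
  exists L, E (fun s => L < rsum (fun m => T m s) N).
Proof.
  induction N; intros H.
  - exists (-1). apply Himp with (fun _ => True); auto. simpl; intros; lra.
  - destruct IHN as [L1 H1]. intros; apply H; lia.
    destruct (H N ltac:(lia)) as [L2 H2]. exists (L1 + L2).
    apply Himp with (fun s => L1 < rsum (fun m => T m s) N /\ L2 < T N s); auto.
    simpl; intros s [A B]; lra.
Qed.

Lemma sum_pinf (T : nat -> R -> R) N : (forall m, (m < N)%nat -> exists L, E (fun s => L < T m s)) ->
  (exists m0, (m0 < N)%nat /\ forall M, E (fun s => M < T m0 s)) ->
  forall M, E (fun s => M < rsum (fun m => T m s) N).
Proof.
  induction N; intros H [m0 [Hm0 Hu]] M. lia.
  destruct (Nat.eq_dec m0 N).
  - subst. destruct (sum_lb T N) as [L HL]. intros; apply H; lia.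
    apply Himp with (fun s => L < rsum (fun m => T m s) N /\ M - L < T N s); auto.
    simpl; intros s [A B]; lra.
  - destruct (H N ltac:(lia)) as [L HL].
    apply Himp with (fun s => M - L < rsum (fun m => T m s) N /\ L < T N s); auto.
    simpl; intros s [A B]; lra.
    apply Hand; auto. apply IHN. intros; apply H; lia. exists m0; split; auto; lia.
Qed.
End SumLim.

Lemma rsum_opp (F : nat -> R) N : rsum (fun m => - F m) N = - rsum F N.
Proof. induction N; simpl. ring. rewrite IHN; ring. Qed.

Lemma rsum_cont (T : nat -> R -> R) N x : (forall m, (m < N)%nat -> continuity_pt (T m) x) ->
  continuity_pt (fun s => rsum (fun m => T m s) N) x.
Proof.
  induction N; intros H; simpl.
  - apply continuity_pt_const; intros ? ?; auto.
  - exact (continuity_pt_plus (fun s => rsum (fun m => T m s) N) (T N) x (IHN ltac:(intros; apply H; lia)) (H N ltac:(lia))).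
Qed.

Lemma zero_exists (lam : nat -> R) (e : nat -> R) N j d :
  (j < N)%nat -> (forall m, (m < N)%nat -> 0 < lam m) -> e j = 0 ->
  (forall m, (m < N)%nat -> m <> j -> d <= e m < 2 * PI) ->
  0 < d <= 2 * PI -> (exists m0, (m0 < N)%nat /\ cos (d - e m0) = 1) ->
  exists s, 0 < s < d /\ rsum (fun m => lam m * kf (s - e m)) N = 0.
Proof.
  intros Hj Hlam Hej He Hd [m0 [Hm0 Hc0]].
  pose proof PI_RGT_0 as Hpi.
  set (T := fun m s => lam m * kf (s - e m)).
  assert (Hin : forall s m, (m < N)%nat -> 0 < s < d -> cos (s - e m) <> 1).
  { intros s m Hm Hs Hc. apply cos1 in Hc.
    - destruct (Nat.eq_dec m j). subst. lra. specialize (He m Hm n). lra.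
    - destruct (Nat.eq_dec m j). subst. lra. specialize (He m Hm n). lra. }
  assert (HT : forall m x, (m < N)%nat -> cos (x - e m) <> 1 -> continuity_pt (T m) x).
  { intros m x Hm Hc. unfold T. 
    exact (continuity_pt_scal (fun s => kf (s - e m)) (lam m) x (kf_cont _ _ Hc)). }
  (* near 0 from the right: sum -> +oo *)
  assert (R0 : nr 0 (fun s => 0 < rsum (fun m => T m s) N)).
  { apply (sum_pinf (nr 0) (nr_imp 0) (nr_and 0) (nr_true 0) T N).
    - intros m Hm. destruct (Req_dec (cos (0 - e m)) 1) as [Hc|Hc].
      + exists 0. apply nr_imp with (fun s => 0 < kf (s - 0)).
        intros s Hs. unfold T. rewrite (kf_shift s (e m) 0 Hc). specialize (Hlam m Hm). nra.
        apply kf_right_sh.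
      + destruct (cont_lb _ _ (HT m 0 Hm Hc)) as [L [HL _]]. exists L; auto.
    - exists j. split; auto. intros M. apply nr_imp with (fun s => M / lam j < kf (s - 0)).
      intros s Hs. unfold T. rewrite Hej. specialize (Hlam j Hj).
      apply Rmult_lt_compat_l with (r := lam j) in Hs; auto.
      replace (lam j * (M / lam j)) with M in Hs by (field; lra). lra.
      apply kf_right_sh. }
  assert (Rd : nl d (fun s => 0 < rsum (fun m => - T m s) N)).
  { apply (sum_pinf (nl d) (nl_imp d) (nl_and d) (nl_true d) (fun m s => - T m s) N).
    - intros m Hm. destruct (Req_dec (cos (d - e m)) 1) as [Hc|Hc].
      + exists 0. apply nl_imp with (fun s => kf (s - d) < 0).
        intros s Hs. unfold T. rewrite (kf_shift s (e m) d Hc). specialize (Hlam m Hm). nra.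
        apply kf_left_sh.
      + destruct (cont_lb _ _ (continuity_pt_opp _ _ (HT m d Hm Hc))) as [L [_ HL]]. exists L; auto.
    - exists m0. split; auto. intros M. apply nl_imp with (fun s => kf (s - d) < - M / lam m0).
      intros s Hs. unfold T. rewrite (kf_shift s (e m0) d Hc0). specialize (Hlam m0 Hm0).
      apply Rmult_lt_compat_l with (r := lam m0) in Hs; auto.
      replace (lam m0 * (- M / lam m0)) with (- M) in Hs by (field; lra). lra.
      apply kf_left_sh. }
  destruct R0 as [d1 [Hd1 H1]]. destruct Rd as [d2 [Hd2 H2]].
  set (a := Rmin d1 d / 3). set (b := d - Rmin d2 d / 3).
  pose proof (Rmin_l d1 d). pose proof (Rmin_r d1 d). pose proof (Rmin_l d2 d). pose proof (Rmin_r d2 d).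
  assert (0 < Rmin d1 d) by (apply Rmin_glb_lt; lra).
  assert (0 < Rmin d2 d) by (apply Rmin_glb_lt; lra).
  assert (Ha : 0 < rsum (fun m => T m a) N) by (apply H1; unfold a; lra).
  assert (Hb : 0 < rsum (fun m => - T m b) N) by (apply H2; unfold b; lra).
  rewrite rsum_opp in Hb.
  destruct (IVT_interv (fun s => - rsum (fun m => T m s) N) a b) as [s [Hs Hs0]].
  - intros x Hx. apply continuity_pt_opp. apply rsum_cont. intros m Hm. apply HT; auto.
    apply Hin; auto. unfold a, b in *; lra.
  - unfold a, b; lra.
  - simpl. lra.
  - simpl. lra.
  - exists s. split. unfold a, b in *; lra. simpl in Hs0. unfold T in Hs0. lra.
Qed.

End PartP4.

Section PartP5.
Open Scope C_scope.

Definition cis (x : R) : C := (cos x, sin x).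
Definition ang (w : C) : R :=
  if Rle_dec 0 (snd w) then acos (fst w) else (2 * PI - acos (fst w))%R.

Lemma cis_mul a b : cis a * cis b = cis (a + b).
Proof. unfold cis, Cmult; simpl. rewrite cos_plus, sin_plus. apply injective_projections; simpl; ring. Qed.

Lemma cis_conj a : Cconj (cis a) = cis (- a).
Proof. unfold cis, Cconj; simpl. rewrite cos_neg, sin_neg. reflexivity. Qed.

Lemma cis_mod a : Cmod (cis a) = 1%R.
Proof. unfold cis, Cmod; simpl. pose proof (sin2_cos2 a) as H. unfold Rsqr in H.
  replace (cos a * (cos a * 1) + sin a * (sin a * 1))%R with 1%R by lra. apply sqrt_1. Qed.

Lemma ang_prop w : Cmod w = 1%R -> (0 <= ang w < 2 * PI)%R /\ cis (ang w) = w.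
Proof.
  intros H. pose proof (unit_sq w H) as Hs. destruct w as [x y]; simpl in *.
  pose proof PI_RGT_0 as Hpi.
  assert (Hx : (-1 <= x <= 1)%R) by nra.
  pose proof (acos_bound x) as Hb. pose proof (cos_acos x Hx) as Hc. pose proof (sin_acos x Hx) as Hsn.
  assert (Hsq : sqrt (1 - x²) = Rabs y).
  { replace (1 - x²)%R with (y * y)%R by (unfold Rsqr; lra). apply sqrt_Rsqr_abs. }
  unfold ang, cis; simpl. destruct (Rle_dec 0 y).
  - split. lra. rewrite Hc, Hsn, Hsq, Rabs_right by lra. reflexivity.
  - split.
    + split. lra. assert (acos x <> 0%R). { intros E. rewrite E, cos_0 in Hc. subst x. nra. }
      destruct Hb; lra.
    + rewrite cos_minus, sin_minus, cos_2PI, sin_2PI, Hc, Hsn, Hsq, Rabs_left by lra.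
      apply injective_projections; simpl; ring.
Qed.

Lemma frac_cis x : cos x <> 1%R -> (1 + cis x) / (1 - cis x) = (0%R, kf x).
Proof.
  intros H. assert (Hne : 1 - cis x <> 0).
  { intros E. apply H. injection E. intros. lra. }
  assert (E : (1 + cis x) = (1 - cis x) * (0%R, kf x)).
  { unfold cis, kf, Cmult, Cminus, Cplus, Copp; simpl. pose proof (sin2_cos2 x) as S. unfold Rsqr in S.
    assert (Hc : (1 - cos x <> 0)%R) by lra.
    apply injective_projections; simpl.
    - apply Rmult_eq_reg_r with (1 - cos x)%R; auto. field_simplify; auto. nra.
    - field; auto. }
  rewrite E. field. auto.
Qed.

Lemma csum_ext (F G : nat -> C) N : (forall m, (m < N)%nat -> F m = G m) -> csum F N = csum G N.
Proof. induction N; simpl; intros H; auto. rewrite IHN, H by (auto; lia). auto. Qed.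

Lemma csum_imag (a b : nat -> R) N :
  csum (fun m => RtoC (a m) * (0%R, b m)) N = (0%R, rsum (fun m => a m * b m)%R N).
Proof. induction N; simpl. reflexivity. rewrite IHN. unfold Cmult, Cplus, RtoC; simpl.
  apply injective_projections; simpl; ring. Qed.

Fixpoint dm (e : nat -> R) (j N : nat) : R :=
  match N with
  | O => (2 * PI)%R
  | S m => if Nat.eq_dec m j then dm e j m else Rmin (dm e j m) (e m)
  end.

Lemma dm_prop (e : nat -> R) j N :
  (forall m, (m < N)%nat -> m <> j -> (0 < e m)%R) ->
  (0 < dm e j N <= 2 * PI)%R /\ (forall m, (m < N)%nat -> m <> j -> (dm e j N <= e m)%R) /\
  (dm e j N = (2 * PI)%R \/ exists m, (m < N)%nat /\ m <> j /\ dm e j N = e m).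
Proof.
  pose proof PI_RGT_0.
  induction N; intros H0; simpl.
  - split. lra. split. intros; lia. auto.
  - destruct IHN as [A [B C]]. intros; apply H0; auto; lia.
    destruct (Nat.eq_dec N j).
    + split; auto. split. intros m Hm Hmj. apply B; lia.
      destruct C as [C|[m [Hm [Hmj Hc]]]]; auto. right; exists m; split; auto; lia.
    + pose proof (Rmin_l (dm e j N) (e N)). pose proof (Rmin_r (dm e j N) (e N)).
      split. split. apply Rmin_glb_lt; try lra. apply H0; auto. lra.
      split. intros m Hm Hmj. destruct (Nat.eq_dec m N). subst; auto.
      specialize (B m ltac:(lia) Hmj). lra.
      unfold Rmin. destruct (Rle_dec (dm e j N) (e N)).
      * destruct C as [C|[m [Hm [Hmj Hc]]]]; auto. right; exists m; split; auto; lia.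
      * right. exists N. split; auto.
Qed.

Definition ea (alpha : nat -> C) j m := ang (alpha j * Cconj (alpha m)).

Lemma ea_facts (alpha : nat -> C) j m : Cmod (alpha j) = 1%R -> Cmod (alpha m) = 1%R ->
  (0 <= ea alpha j m < 2 * PI)%R /\ cis (ea alpha j m) = alpha j * Cconj (alpha m).
Proof.
  intros Hj Hm. apply ang_prop. rewrite Cmod_mult, Cmod_conj, Hj, Hm. ring.
Qed.

Lemma ea_jj (alpha : nat -> C) j : Cmod (alpha j) = 1%R -> ea alpha j j = 0%R.
Proof.
  intros H. unfold ea. rewrite (unit_conj _ H). unfold ang; simpl.
  destruct (Rle_dec 0 0). apply acos_1. lra.
Qed.

Lemma cis_0 : cis 0 = 1.
Proof. unfold cis. rewrite cos_0, sin_0. reflexivity. Qed.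

Lemma ea_nz (alpha : nat -> C) j m : Cmod (alpha j) = 1%R -> Cmod (alpha m) = 1%R ->
  alpha j <> alpha m -> ea alpha j m <> 0%R.
Proof.
  intros Hj Hm Hne E. destruct (ea_facts alpha j m Hj Hm) as [_ C].
  rewrite E in C. apply Hne.
  transitivity (alpha j * Cconj (alpha m) * alpha m).
  - rewrite <- Cmult_assoc. rewrite (Cmult_comm (Cconj (alpha m))), (unit_conj _ Hm). ring.
  - rewrite <- C, cis_0. ring.
Qed.

Lemma rot (alpha : nat -> C) j m s : Cmod (alpha j) = 1%R -> Cmod (alpha m) = 1%R ->
  alpha m * (Cconj (alpha j) * cis s) = cis (s - ea alpha j m).
Proof.
  intros Hj Hm. destruct (ea_facts alpha j m Hj Hm) as [_ C].
  unfold Rminus. rewrite <- cis_mul, <- cis_conj, C, Cmult_conj, Cconj_conj. ring.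
Qed.

Lemma cosne (e : nat -> R) N j s m : (m < N)%nat -> e j = 0%R -> (0 < s < 2 * PI)%R ->
  (forall m, (m < N)%nat -> m <> j -> (s < e m < 2 * PI)%R) -> cos (s - e m) <> 1%R.
Proof.
  intros Hm Hej Hs He Hc. apply cos1 in Hc.
  - destruct (Nat.eq_dec m j). subst. lra. specialize (He m Hm n). lra.
  - destruct (Nat.eq_dec m j). subst. lra. specialize (He m Hm n). lra.
Qed.

Lemma exist_j (N : nat) (lam : nat -> R) (alpha : nat -> C) j :
  (j < N)%nat -> (forall m, (m < N)%nat -> (0 < lam m)%R) ->
  (forall m, (m < N)%nat -> Cmod (alpha m) = 1%R) ->
  (forall i m, (i < N)%nat -> (m < N)%nat -> alpha i = alpha m -> i = m) ->
  exists s : R, ((0 < s < 2 * PI)%R /\ (forall m, (m < N)%nat -> m <> j -> (s < ea alpha j m)%R)) /\ gfun N lam alpha (Cconj (alpha j) * cis s) = RtoC 0.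
Proof.
  intros Hj Hlam Ha Hinj.
  pose proof PI_RGT_0.
  set (e := ea alpha j).
  assert (Hej : e j = 0%R) by (apply ea_jj; auto).
  assert (Hep : forall m, (m < N)%nat -> m <> j -> (0 < e m < 2 * PI)%R).
  { intros m Hm Hmj. destruct (ea_facts alpha j m (Ha j Hj) (Ha m Hm)) as [[A B] _].
    assert (e m <> 0%R). { apply ea_nz; auto; intros E; apply Hinj in E; auto. }
    unfold e in *; lra. }
  destruct (dm_prop e j N) as [D1 [D2 D3]]. intros; apply Hep; auto.
  destruct (zero_exists lam e N j (dm e j N) Hj Hlam Hej) as [s [Hs Hz]].
  - intros m Hm Hmj. split. apply D2; auto. apply Hep; auto.
  - auto.
  - destruct D3 as [D3|[m [Hm [Hmj D3]]]].
    + exists j. split; auto. rewrite D3, Hej, Rminus_0_r. apply cos_2PI.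
    + exists m. split; auto. rewrite D3, Rminus_diag. apply cos_0.
  - exists s. assert (Hs2 : (0 < s < 2 * PI)%R) by lra.
    assert (Hsm : forall m, (m < N)%nat -> m <> j -> (s < e m < 2 * PI)%R).
    { intros m Hm Hmj. specialize (D2 m Hm Hmj). specialize (Hep m Hm Hmj). lra. }
    split. split; auto. intros m Hm Hmj. apply Hsm; auto.
    unfold gfun.
    rewrite (csum_ext _ (fun m => RtoC (lam m) * (0%R, kf (s - e m))) N).
    + rewrite csum_imag, Hz. apply injective_projections; simpl; ring.
    + intros m Hm. rewrite rot by auto. rewrite frac_cis. reflexivity.
      apply (cosne e N j s m); auto.
Qed.

End PartP5.

Open Scope C_scope.

Lemma Csub0 (a b : C) : a - b = 0 -> a = b.
Proof. intros H. replace a with (a - b + b) by ring. rewrite H; ring. Qed.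

Lemma Csubnz (a b : C) : a <> b -> a - b <> 0.
Proof. intros H H0. apply H, Csub0; auto. Qed.

Lemma cis_eq a b : cis a = cis b -> cos (a - b) = 1%R.
Proof.
  intros H. assert (E : cis (a - b) = cis 0).
  { unfold Rminus. rewrite <- cis_mul, H, cis_mul, Rplus_opp_r. auto. }
  apply (f_equal fst) in E. simpl in E. rewrite E. apply cos_0.
Qed.

Theorem lemma8 (n : nat) (f : C -> C) (t : R) (N : nat)
    (lam : nat -> R) (alpha : nat -> C) :
  extremal n f ->
  (0 < t)%R ->
  f (RtoC 0) = RtoC (exp (- t)) ->
  (1 <= N <= n)%nat ->
  (forall j, (j < N)%nat -> (0 < lam j)%R) ->
  (forall j, (j < N)%nat -> Cmod (alpha j) = 1%R) ->
  (forall i j, (i < N)%nat -> (j < N)%nat -> alpha i = alpha j -> i = j) ->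
  (forall z, (Cmod z < 1)%R -> f z = cexp (gfun N lam alpha z)) ->
  exists beta : nat -> C,
    (forall j, (j < N)%nat -> Cmod (beta j) = 1%R) /\
    (forall i j, (i < N)%nat -> (j < N)%nat -> beta i = beta j -> i = j) /\
    (forall j k, (j < N)%nat -> (k < N)%nat -> beta j <> Cconj (alpha k)) /\
    (forall z, (forall k, (k < N)%nat -> z <> Cconj (alpha k)) ->
       (gfun N lam alpha z = RtoC 0 <-> exists j, (j < N)%nat /\ z = beta j)) /\
    (forall z, (forall k, (k < N)%nat -> z <> Cconj (alpha k)) ->
       gfun N lam alpha z =
         RtoC t * cprod (fun j => z - beta j) N
                / cprod (fun j => z - Cconj (alpha j)) N).
Proof.
  intros _ Ht Hf0 HN Hlam Ha Hinj Hf.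
  pose proof PI_RGT_0 as Hpi.
  assert (Hsum : sC lam N = RtoC t).
  { assert (H0 := Hf (RtoC 0) ltac:(rewrite Cmod_0; lra)).
    rewrite Hf0, gfun_0, sC_real in H0. unfold cexp in H0. simpl in H0.
    injection H0. intros _ H1. rewrite Ropp_0, cos_0, Rmult_1_r in H1.
    apply exp_inv in H1. rewrite sC_real. f_equal. lra. }
  assert (Hex : forall j, exists s : R, (j < N)%nat ->
     ((0 < s < 2 * PI)%R /\ (forall m, (m < N)%nat -> m <> j -> (s < ea alpha j m)%R)) /\
     gfun N lam alpha (Cconj (alpha j) * cis s) = RtoC 0).
  { intros j. destruct (Compare_dec.lt_dec j N) as [Hj|Hj].
    - destruct (exist_j N lam alpha j Hj Hlam Ha Hinj) as [s Hs]. exists s; auto.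
    - exists 0%R. intros; lia. }
  set (sf := fun j => proj1_sig (constructive_indefinite_description _ (Hex j))).
  assert (Hsf : forall j, (j < N)%nat ->
     ((0 < sf j < 2 * PI)%R /\ (forall m, (m < N)%nat -> m <> j -> (sf j < ea alpha j m)%R)) /\
     gfun N lam alpha (Cconj (alpha j) * cis (sf j)) = RtoC 0).
  { intros j Hj. exact (proj2_sig (constructive_indefinite_description _ (Hex j)) Hj). }
  clearbody sf.
  set (beta := fun j => Cconj (alpha j) * cis (sf j)).
  assert (Hmod : forall j, (j < N)%nat -> Cmod (beta j) = 1%R).
  { intros j Hj. unfold beta. rewrite Cmod_mult, Cmod_conj, cis_mod, Ha; auto. ring. }
  assert (Hzero : forall j, (j < N)%nat -> gfun N lam alpha (beta j) = RtoC 0).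
  { intros j Hj. apply Hsf; auto. }
  assert (Hcos : forall j m, (j < N)%nat -> (m < N)%nat -> cos (sf j - ea alpha j m) <> 1%R).
  { intros j m Hj Hm. destruct (Hsf j Hj) as [[A B] _].
    apply (cosne (ea alpha j) N j); auto. apply ea_jj; auto.
    intros m' Hm' Hmj. split. auto. apply (ea_facts alpha j m' (Ha j Hj) (Ha m' Hm')). }
  assert (Hpole : forall j k, (j < N)%nat -> (k < N)%nat -> beta j <> Cconj (alpha k)).
  { intros j k Hj Hk E. apply (Hcos j k Hj Hk).
    assert (E2 : alpha k * beta j = 1). { rewrite E. apply unit_conj; auto. }
    unfold beta in E2. rewrite rot in E2 by auto.
    apply (f_equal fst) in E2. simpl in E2. auto. }
  assert (Hinjb : forall i j, (i < N)%nat -> (j < N)%nat -> beta i = beta j -> i = j).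
  { intros j k Hj Hk E. destruct (Nat.eq_dec j k) as [|Hjk]; auto. exfalso.
    assert (E2 : alpha k * beta j = alpha k * beta k) by (rewrite E; auto).
    unfold beta in E2. rewrite !rot in E2 by auto. rewrite (ea_jj alpha k (Ha k Hk)) in E2.
    apply cis_eq in E2.
    destruct (ea_facts alpha j k (Ha j Hj) (Ha k Hk)) as [[A1 B1] C1].
    destruct (ea_facts alpha k j (Ha k Hk) (Ha j Hj)) as [[A2 B2] C2].
    assert (Hsum2 : (ea alpha j k + ea alpha k j = 2 * PI)%R).
    { assert (E3 : cis (ea alpha j k + ea alpha k j) = cis 0).
      { rewrite <- cis_mul, C1, C2, cis_0.
        transitivity ((alpha j * Cconj (alpha j)) * (alpha k * Cconj (alpha k))). ring.
        rewrite !unit_conj by auto. ring. }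
      apply cis_eq in E3. rewrite Rminus_0_r in E3.
      assert (Hnz1 : ea alpha j k <> 0%R). { apply ea_nz; auto; intros E4; apply Hinj in E4; auto. }
      assert (E5 : cos ((ea alpha j k + ea alpha k j) - 2 * PI) = 1%R).
      { rewrite cos_minus, cos_2PI, sin_2PI, E3. ring. }
      apply cos1 in E5; lra. }
    destruct (Hsf j Hj) as [[Sj Sj2] _]. destruct (Hsf k Hk) as [[Sk Sk2] _].
    specialize (Sj2 k Hk ltac:(auto)). specialize (Sk2 j Hj ltac:(auto)).
    apply cos1 in E2; lra. }
  exists beta. split; auto. split; auto. split; auto.
  destruct N as [|N']. lia.
  assert (HF : forall z, Qf lam alpha (S N') z - RtoC t * cprod (fun j => z - beta j) (S N') = 0).
  { apply (poly_roots N' _ beta).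
    - apply poly_ext with (fun z =>
        (fun z => Qf lam alpha (S N') z - sC lam (S N') * cprod (fun j => z - Cconj (alpha j)) (S N')) z
        + (fun z => (- sC lam (S N')) * (cprod (fun j => z - beta j) (S N') - cprod (fun j => z - Cconj (alpha j)) (S N'))) z).
      + intros z. simpl. rewrite Hsum. ring.
      + apply poly_add. apply Q_lead. apply poly_scal, cprod_diff.
    - auto.
    - intros i Hi. rewrite <- gfun_Q; auto.
      rewrite Hzero by auto. rewrite (cprod_zero' (fun j => beta i - beta j) (S N') i Hi) by ring. ring.
      }
  assert (HG : forall z, (forall k, (k < S N')%nat -> z <> Cconj (alpha k)) ->
     gfun (S N') lam alpha z * cprod (fun j => z - Cconj (alpha j)) (S N') = RtoC t * cprod (fun j => z - beta j) (S N')).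
  { intros z Hz. rewrite gfun_Q; auto. apply Csub0. apply HF. }
  assert (HD : forall z, (forall k, (k < S N')%nat -> z <> Cconj (alpha k)) ->
     cprod (fun j => z - Cconj (alpha j)) (S N') <> 0).
  { intros z Hz. apply cprod_nz. intros j Hj. apply Csubnz; auto. }
  assert (Ht0 : RtoC t <> 0). { intros E. injection E. lra. }
  split.
  - intros z Hz. split.
    + intros E. specialize (HG z Hz). rewrite E in HG.
      assert (E2 : cprod (fun j => z - beta j) (S N') = 0).
      { rewrite Cmult_0_l in HG. destruct (Cmult_eq0 _ _ (eq_sym HG)) as [H|H]; auto. contradiction. }
      destruct (cprod_zero _ _ E2) as [j [Hj Hb]]. exists j. split; auto. apply Csub0; auto.
    + intros [j [Hj E]]. rewrite E. auto.
  - intros z Hz. rewrite <- (HG z Hz). field. auto.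
Qed.
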